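(* Let $d\ge3$ be odd, $k\in\mathbb{Z}^+$, $\phi_{(d,k)}(x)=x^d+kdx^{d-1}-kd$, and $a=-k(d-1)$. Then $\phi_{(d,k)}^n(a)>0$ for all $n\ge1$.
   Context: $\phi^n$ denotes the $n$-fold iterate. *)

(* Defs.v *)
From Stdlib Require Import ZArith.
Open Scope Z_scope.

Definition phi (d k : Z) (x : Z) : Z := x ^ d + k * d * x ^ (d - 1) - k * d.

Fixpoint iter_n (n : nat) (f : Z -> Z) (x : Z) : Z :=
  match n with
  | O => x
  | S m => f (iter_n m f x)
  end.

(* Main.v *)
Require Import Defs.
From Stdlib Require Import ZArith Lia.
Open Scope Z_scope.

Lemma phi_ge (d k x : Z) (hd : 3 <= d) (hk : 0 < k) (hx : 1 <= x) : x <= phi d k x.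
Proof.
  unfold phi.
  assert (Hm : 1 <= x ^ (d - 1)).
  { pose proof (Z.pow_le_mono_l 1 x (d - 1) (ltac:(lia))). rewrite Z.pow_1_l in H by lia. exact H. }
  replace d with (Z.succ (d - 1)) at 1 by lia.
  rewrite Z.pow_succ_r by lia.
  nia.
Qed.

Theorem lemma3p3 (d k : Z) (hd : 3 <= d) (hodd : Z.odd d = true) (hk : 0 < k) (n : nat) (hn : (1 <= n)%nat) :
  0 < iter_n n (phi d k) (- k * (d - 1)).
Proof.
  assert (H1 : 1 <= phi d k (- k * (d - 1))).
  { destruct (proj1 (Z.odd_spec d) hodd) as [j Hj].
    set (a := - k * (d - 1)).
    assert (Ha2 : 1 <= a ^ 2) by (unfold a; nia).
    assert (Hp : a ^ 2 <= a ^ (d - 1)).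
    { replace (d - 1) with (2 * j) by lia. rewrite Z.pow_mul_r by lia.
      replace j with (Z.succ (j - 1)) at 1 by lia.
      rewrite Z.pow_succ_r by lia.
      assert (1 <= (a ^ 2) ^ (j - 1)).
      { pose proof (Z.pow_le_mono_l 1 (a ^ 2) (j - 1) (ltac:(lia))) as H. rewrite Z.pow_1_l in H by lia. exact H. }
      nia. }
    unfold phi. replace d with (Z.succ (d - 1)) at 1 by lia.
    rewrite Z.pow_succ_r by lia.
    assert (a ^ 2 = k * k * (d - 1) * (d - 1)) by (unfold a; ring).
    assert (a * a ^ (d - 1) + k * d * a ^ (d - 1) = k * a ^ (d - 1)) by (unfold a; ring).
    nia. }
  induction n as [|n IH]; [lia|].
  destruct n as [|n].
  - simpl. lia.
  - assert (0 < iter_n (S n) (phi d k) (- k * (d - 1))) by (apply IH; lia).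
    change (iter_n (S (S n)) (phi d k) (- k * (d - 1))) with
      (phi d k (iter_n (S n) (phi d k) (- k * (d - 1)))).
    pose proof (phi_ge d k _ hd hk (ltac:(lia) : 1 <= iter_n (S n) (phi d k) (- k * (d - 1)))).
    lia.
Qed.
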